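(* There is an absolute constant $c>0$ such that for infinitely many $d$ there exists a high-multiplicity Bin Packing instance with $d$ item types (sizes $s_1,\dots,s_d$, multiplicities $a_1,\dots,a_d\in\mathbb{Z}_{\ge 0}$, bin capacity $C$) for which every optimal solution $x$ of its configuration ILP satisfies $|\operatorname{supp}(x)|\ge 2^{cd}$, i.e. $|\operatorname{supp}(x)|\in 2^{\Omega(d)}$. More concretely, for every integer $d'\ge 1$ there is such an instance with $d=12d'+4$ item types in which every optimal solution uses at least $2^{d'}-1$ pairwise distinct configurations.
   Context: High-multiplicity Bin Packing: given $d$ item types with sizes $s_i$, amounts $a_i\in\mathbb{Z}_{\ge0}$ and a bin capacity $C$, pack all items into as few bins as possible so that every bin has total size at most $C$. A configuration is a vector $p\in\mathbb{Z}^d_{\ge 0}$ with $s^Tp\le C$ (a feasible filling of one bin); let $\mathcal{C}$ be the set of all configurations. The configuration ILP is $\min\{\mathbf{1}^Tx : \sum_{p\in\mathcal{C}} x_p\, p = a,\ x\in\mathbb{Z}^{\mathcal{C}}_{\ge0}\}$, where $x_p$ is the number of bins filled with configuration $p$. The support of a vector $x$ is $\operatorname{supp}(x)=\{p: x_p\neq 0\}$. *)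

(* Defs.v *)
From mathcomp Require Import all_boot.
Set Implicit Arguments. Unset Strict Implicit. Unset Printing Implicit Defensive.

(* Every configuration p (a vector in
   Z_{>=0}^d with s^T p <= C) satisfies p i <= C when all sizes are >= 1,
   so configurations are encoded as finite functions 'I_d -> 'I_C.+1;
   the index type [cand d C] thus contains every configuration. *)
Definition cand (d C : nat) := {ffun 'I_d -> 'I_C.+1}.

Definition is_config d (s : 'I_d -> nat) (C : nat) (p : cand d C) : bool :=
  \sum_(i < d) s i * p i <= C.

Arguments is_config {d} s C p.

Definition config_ilp_feasible d (s a : 'I_d -> nat) (C : nat)
    (x : {ffun cand d C -> nat}) : Prop :=
  (forall p, x p != 0 -> is_config s C p) /\
  (forall i : 'I_d, \sum_(p : cand d C) x p * p i = a i).

Arguments config_ilp_feasible {d} s a C x.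

Definition nbins d C (x : {ffun cand d C -> nat}) : nat :=
  \sum_(p : cand d C) x p.

Definition config_ilp_optimal d (s a : 'I_d -> nat) (C : nat)
    (x : {ffun cand d C -> nat}) : Prop :=
  config_ilp_feasible s a C x /\
  (forall y, config_ilp_feasible s a C y -> nbins x <= nbins y).

Definition supp d C (x : {ffun cand d C -> nat}) : {set cand d C} :=
  [set p | x p != 0].
Arguments config_ilp_optimal {d} s a C x.

(* Main.v *)
Require Import Defs.
From mathcomp Require Import all_boot zify ring.
Set Implicit Arguments. Unset Strict Implicit. Unset Printing Implicit Defensive.

Lemma digit_sum_lt B n (f : nat -> nat) : (forall m, m < n -> f m < B) ->
  \sum_(m < n) f m * B ^ m < B ^ n.
Proof.
elim: n => [|n IH] Hf; first by rewrite big_ord0 expn0.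
rewrite big_ord_recr /=.
have h1 := IH (fun m hm => Hf m (ltnW hm)).
have h2 : f n < B := Hf n (ltnSn n).
rewrite expnS.
apply: (@leq_trans (B ^ n + f n * B ^ n)); first by rewrite ltn_add2r.
by rewrite -{1}(mul1n (B ^ n)) -mulnDl add1n leq_mul2r h2 orbT.
Qed.

Lemma digits_uniq B n (f g : nat -> nat) :
  (forall m, m < n -> f m < B) -> (forall m, m < n -> g m < B) ->
  \sum_(m < n) f m * B ^ m = \sum_(m < n) g m * B ^ m ->
  forall m, m < n -> f m = g m.
Proof.
elim: n => [|n IH] Hf Hg E m Hm; first by [].
rewrite !big_ord_recr /= in E.
have lf := digit_sum_lt (fun m hm => Hf m (ltnW hm)).
have lg := digit_sum_lt (fun m hm => Hg m (ltnW hm)).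
have Bp : 0 < B ^ n.
  by rewrite expn_gt0; have := Hf n (ltnSn n); case: (B) => //.
have Etop : f n = g n.
  have := congr1 (fun z => z %/ B ^ n) E => /=.
  by rewrite !(addnC (\sum_(i < n) _)) !divnMDl // !divn_small // !addn0.
rewrite Etop in E; move/addIn: E => E.
case: (ltngtP m n) => [mn|//|->//].
- exact: IH (fun m hm => Hf m (ltnW hm)) (fun m hm => Hg m (ltnW hm)) E m mn.
- by move: Hm; rewrite ltnS leqNgt => /negP; case: (ltngtP m n).
Qed.

Lemma coef_ge (L : seq (nat * nat)) n v : (n, v) \in L ->
  v <= \sum_(e <- L) (e.1 == n) * e.2.
Proof. by move=> H; rewrite (big_rem _ H) /= eqxx mul1n leq_addr. Qed.

Lemma coef_le (L : seq (nat * nat)) n R0 : uniq (map fst L) ->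
  (forall e, e \in L -> e.2 <= R0) -> \sum_(e <- L) (e.1 == n) * e.2 <= R0.
Proof.
elim: L => [|e L IH] /= U H; first by rewrite big_nil.
rewrite big_cons; case/andP: U => U1 U2.
case: eqP => [E|_].
  rewrite big1_seq ?addn0; first by rewrite mul1n; apply: H; rewrite inE eqxx.
  move=> e' /andP[_ He']; case: eqP => // E'.
  by move: U1; rewrite E -E' (map_f fst He').
rewrite mul0n add0n; apply: IH => // e' He'; apply: H; by rewrite inE He' orbT.
Qed.

Section Cons.
Variables (K d : nat).
Hypothesis hd : d = 6 * K + 4.
Hypothesis hK : 0 < K.

Definition NN := 2 ^ K.
Definition Bz := NN.+1.
Definition MM := Bz ^ NN.
Definition cc j := Bz ^ (2 ^ j).
Definition RR := MM + MM * MM.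
Definition Bs := (NN * RR).+1.
Definition ix j r := 6 * j + r.
Definition nE := 4 * K.+1.

Definition eqn (m : nat) : seq (nat * nat) :=
  let j := m %/ 4 in
  match m %% 4 with
  | 0 => [:: (ix j 0, 1); (ix j 1, 1)]
  | 1 => if j is j'.+1 then
           [:: (ix j 2, 1); (ix j 3, 1); (ix j' 5, 1); (ix j' 0, MM);
               (ix j' 4, cc j'); (ix j' 1, cc j' * MM)]
         else [:: (ix 0 2, 1); (ix 0 3, 1)]
  | 2 => if j < K then [:: (ix j 2, 1); (ix j 4, 1); (ix j 1, MM)] else [::]
  | _ => if j < K then [:: (ix j 3, 1); (ix j 5, 1); (ix j 0, MM)] else [::]
  end.

Definition rhs (m : nat) : nat :=
  let j := m %/ 4 in
  match m %% 4 with
  | 0 => 1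
  | 1 => if j is j'.+1 then MM + cc j' * MM else 1
  | 2 => if j < K then MM else 0
  | _ => if j < K then MM else 0
  end.

Definition coef (n m : nat) := \sum_(e <- eqn m) (e.1 == n) * e.2.
Definition sz (i : 'I_d) := \sum_(m < nE) coef i m * Bs ^ m.
Definition Cap := \sum_(m < nE) rhs m * Bs ^ m.
Definition DD (p : 'I_d -> nat) m := \sum_(i < d) p i * coef i m.
Definition pn (p : 'I_d -> nat) n := \sum_(i < d | (i : nat) == n) p i.

Lemma D_eqn p m : DD p m = \sum_(e <- eqn m) e.2 * pn p e.1.
Proof.
rewrite /DD /coef.
rewrite (eq_bigr (fun i : 'I_d => \sum_(e <- eqn m) p i * ((e.1 == i) * e.2))); last first.
  by move=> i _; rewrite big_distrr.
rewrite exchange_big /=; apply: eq_bigr => e _.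
rewrite /pn big_distrr /= [in RHS]big_mkcond /=. apply: eq_bigr => i _.
rewrite [e.1 == _]eq_sym; case: (_ == _); by rewrite ?mul1n ?mul0n ?muln0 // mulnC.
Qed.

Lemma dot_digits (p : 'I_d -> nat) :
  \sum_(i < d) sz i * p i = \sum_(m < nE) DD p m * Bs ^ m.
Proof.
rewrite /sz /DD.
rewrite (eq_bigr (fun i : 'I_d => \sum_(m < nE) coef i m * Bs ^ m * p i)); last first.
  by move=> i _; rewrite big_distrl.
rewrite exchange_big /=; apply: eq_bigr => m _.
rewrite big_distrl /=; apply: eq_bigr => i _; ring.
Qed.

Lemma pn_fun (f : nat -> nat) n : n < d -> pn (fun i => f i) n = f n.
Proof.
by move=> H; rewrite /pn (big_pred1 (Ordinal H)).
Qed.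

Lemma divmod4 j e : e < 4 -> (4 * j + e) %/ 4 = j /\ (4 * j + e) %% 4 = e.
Proof. move=> He; rewrite mulnC divnMDl // divn_small // addn0 modnMDl modn_small //. Qed.

Lemma divmod6 j e : e < 6 -> (6 * j + e) %/ 6 = j /\ (6 * j + e) %% 6 = e.
Proof. move=> He; rewrite mulnC divnMDl // divn_small // addn0 modnMDl modn_small //. Qed.


Definition bit t j : nat := odd (t %/ 2 ^ j).
Definition uu t j := Bz ^ (t %% 2 ^ j).
Definition vv t j r :=
  match r with
  | 0 => bit t j | 1 => 1 - bit t j | 2 => bit t j * uu t j
  | 3 => (1 - bit t j) * uu t j | 4 => bit t j * (MM - uu t j)
  | _ => (1 - bit t j) * (MM - uu t j) end.
Definition val t n := vv t (n %/ 6) (n %% 6).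

Lemma val_ix t j r : r < 6 -> val t (ix j r) = vv t j r.
Proof. by move=> Hr; rewrite /val /ix; case: (divmod6 j Hr) => -> ->. Qed.

Lemma Bz_gt0 : 0 < Bz. Proof. by []. Qed.
Lemma MM_gt0 : 0 < MM. Proof. by rewrite /MM expn_gt0. Qed.

Lemma uu_le t j : t < NN -> uu t j <= MM.
Proof.
move=> Ht; rewrite /uu /MM leq_pexp2l //.
by apply: ltnW; apply: leq_ltn_trans (leq_mod _ _) Ht.
Qed.

Lemma bit_le t j : bit t j <= 1. Proof. by rewrite /bit; case: odd. Qed.

Lemma val_le t n : t < NN -> val t n <= MM.
Proof.
move=> Ht; rewrite /val /vv.
have h1 := uu_le (n %/ 6) Ht; have h2 := MM_gt0.
case: (n %% 6) => [|[|[|[|[|r]]]]]; rewrite /bit; case: odd => /=; lia.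
Qed.

Lemma mod_step t j : t %% 2 ^ j.+1 = t %% 2 ^ j + bit t j * 2 ^ j.
Proof.
rewrite /bit.
have lt1 : t %% 2 ^ j < 2 ^ j by rewrite ltn_mod expn_gt0.
move: (divn_eq t (2 ^ j)) lt1.
move: (t %/ 2 ^ j) (t %% 2 ^ j) => q r -> lt1.
have hp : 0 < 2 ^ j by rewrite expn_gt0.
have e2 := divn_eq q 2; rewrite modn2 in e2.
have -> : q * 2 ^ j + r = q %/ 2 * 2 ^ j.+1 + (r + odd q * 2 ^ j).
  rewrite {1}e2 expnS; ring.
rewrite modnMDl modn_small //.
rewrite expnS; case: odd => /=; lia.
Qed.

Lemma uu_step t j : uu t j.+1 = cc j ^ bit t j * uu t j.
Proof. by rewrite /uu mod_step /cc -expnM -expnD; congr (_ ^ _); ring. Qed.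

Lemma uu_K t : t < NN -> uu t K = Bz ^ t.
Proof. by move=> Ht; rewrite /uu modn_small. Qed.

Lemma m_dec m : m < nE -> exists j e, [/\ m = 4 * j + e, e < 4 & j <= K].
Proof.
move=> Hm; exists (m %/ 4), (m %% 4); split.
- by rewrite mulnC -divn_eq.
- by rewrite ltn_mod.
- by rewrite -ltnS ltn_divLR // mulnC.
Qed.

Lemma D_conf t m : t < NN -> m < nE -> DD (fun i => val t i) m = rhs m.
Proof.
move=> Ht Hm; have [j [e [-> He Hj]]] := m_dec Hm.
rewrite D_eqn /eqn /rhs; case: (divmod4 j He) => -> ->.

move: He; case: e => [|[|[|[|//]]]] _.
- rewrite !big_cons big_nil !pn_fun; try (rewrite /ix /=; lia).
  have u1 := uu_le j Ht; rewrite /= !val_ix //= /bit; case: odd => /=; lia.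
- case: j Hj => [|j] Hj.
    rewrite !big_cons big_nil !pn_fun; try (rewrite /ix /=; lia).
    by rewrite /= !val_ix //= /uu expn0 modn1 expn0 /bit; case: odd.
  rewrite !big_cons big_nil !pn_fun; try (rewrite /ix /=; lia).
  rewrite /= !val_ix //= uu_step.
  have u0 := uu_le j Ht.
  have hc : cc j * uu t j <= cc j * MM by rewrite leq_mul2l u0 orbT.
  rewrite /bit; case: (odd (t %/ 2 ^ j)); case: (odd (t %/ 2 ^ j.+1)) => /=;
   rewrite ?expn1 ?expn0 ?mul1n ?mul0n ?muln1 ?muln0 ?subnn ?subn0 ?mulnBr;
   lia.
- case: ifP => Hj'; last by rewrite big_nil.
  rewrite !big_cons big_nil !pn_fun; try (rewrite /ix /=; lia).
  have u1 := uu_le j Ht; rewrite /= !val_ix //= /bit; case: odd => /=; lia.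
- case: ifP => Hj'; last by rewrite big_nil.
  rewrite !big_cons big_nil !pn_fun; try (rewrite /ix /=; lia).
  have u1 := uu_le j Ht; rewrite /= !val_ix //= /bit; case: odd => /=; lia.
Qed.

Lemma cc_le j : j < K -> cc j <= MM.
Proof.
move=> Hj; rewrite /cc /MM leq_pexp2l // /NN.
by rewrite leq_exp2l // ltnW.
Qed.

Lemma eqn_ok m : m < nE ->
  uniq (map fst (eqn m)) /\ (forall e, e \in eqn m -> e.2 <= rhs m).
Proof.
move=> Hm; have [j [e [-> He Hj]]] := m_dec Hm.
rewrite /eqn /rhs; case: (divmod4 j He) => -> ->.
have h1 := MM_gt0.
move: He; case: e => [|[|[|[|//]]]] _.
- split; first by rewrite /= ?inE /ix; lia.
  by move=> x; rewrite !inE => /orP[] /eqP -> /=.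
- case: j Hj => [|j] Hj /=.
    split; first by rewrite /= ?inE /ix; lia.
    by move=> x; rewrite !inE => /orP[] /eqP -> /=.
  split; first by rewrite /= ?inE /ix; lia.
  have hc : 1 <= cc j by rewrite /cc expn_gt0.
  move=> x; rewrite !inE => H.
  repeat (case/orP: H => [/eqP -> /= | H]); try lia; try (by move/eqP: H => -> /=; lia).
  apply: leq_trans (leq_addl MM _).
  by rewrite -{1}(muln1 (cc j)) leq_mul2l h1 orbT.
- case: ifP => Hj'; last by split => // e; rewrite in_nil.
  split; first by rewrite /= ?inE /ix; lia.
  by move=> x; rewrite !inE => /or3P[] /eqP -> /=.
- case: ifP => Hj'; last by split => // e; rewrite in_nil.
  split; first by rewrite /= ?inE /ix; lia.
  by move=> x; rewrite !inE => /or3P[] /eqP -> /=.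
Qed.

Lemma rhs_le m : m < nE -> rhs m <= RR.
Proof.
move=> Hm; have [j [e [-> He Hj]]] := m_dec Hm.
rewrite /rhs /RR; case: (divmod4 j He) => -> ->.
have h1 := MM_gt0.
move: He; case: e => [|[|[|[|//]]]] _ /=; try lia.
- case: j Hj => [|j] Hj; first lia.
  by rewrite leq_add2l leq_mul2r (cc_le Hj) orbT.
- case: ifP => _; lia.
- case: ifP => _; lia.
Qed.

Lemma sz_le i : sz i <= Cap.
Proof.
apply: leq_sum => m _; rewrite leq_mul2r; apply/orP; right.
have [U H] := eqn_ok (ltn_ord m).
exact: coef_le U H.
Qed.

Lemma coef_sz (i : 'I_d) m : m < nE -> coef i m <= sz i.
Proof.
move=> Hm; rewrite /sz (bigD1 (Ordinal Hm)) //=.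
apply: leq_trans (leq_addr _ _).
by rewrite -{1}(muln1 (coef i m)) leq_mul2l expn_gt0 orbT.
Qed.

Lemma sz_pos i : 0 < sz i.
Proof.
have Hi : (i : nat) < 6 * K + 4 by rewrite -hd.
have ei : (i : nat) = ix (i %/ 6) (i %% 6) by rewrite /ix mulnC -divn_eq.
have hr : i %% 6 < 6 by rewrite ltn_mod.
move: ei hr; move: (i %/ 6) (i %% 6) => j r ei hr.
rewrite ei /ix in Hi.
have ok : forall m v, m < nE -> ((i : nat), v) \in eqn m -> 0 < v -> 0 < sz i.
  move=> m v Hm Hin Hv; apply: leq_trans (coef_sz i Hm).
  by rewrite /coef; apply: leq_trans Hv (coef_ge Hin).
move: hr; case: r ei Hi => [|[|[|[|[|[|//]]]]]] ei Hi _; rewrite ei in ok.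
- apply: (ok (4 * j + 0) 1) => //; first by rewrite /nE; lia.
  by rewrite /eqn; case: (divmod4 j (isT : 0 < 4)) => -> ->; rewrite inE eqxx.
- apply: (ok (4 * j + 0) 1) => //; first by rewrite /nE; lia.
  by rewrite /eqn; case: (divmod4 j (isT : 0 < 4)) => -> ->; rewrite !inE eqxx orbT.
- apply: (ok (4 * j + 1) 1) => //; first by rewrite /nE; lia.
  rewrite /eqn; case: (divmod4 j (isT : 1 < 4)) => -> ->.
  by case: j {ei Hi ok} => [|j]; rewrite !inE eqxx.
- apply: (ok (4 * j + 1) 1) => //; first by rewrite /nE; lia.
  rewrite /eqn; case: (divmod4 j (isT : 1 < 4)) => -> ->.
  by case: j {ei Hi ok} => [|j]; rewrite !inE eqxx ?orbT.
- apply: (ok (4 * j + 2) 1) => //; first by rewrite /nE; lia.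
  rewrite /eqn; case: (divmod4 j (isT : 2 < 4)) => -> ->.
  have -> : j < K by lia.
  by rewrite !inE eqxx ?orbT.
- apply: (ok (4 * j + 3) 1) => //; first by rewrite /nE; lia.
  rewrite /eqn; case: (divmod4 j (isT : 3 < 4)) => -> ->.
  have -> : j < K by lia.
  by rewrite !inE eqxx ?orbT.
Qed.

Section Used.
Variable p : 'I_d -> nat.
Hypothesis Hp : forall m, m < nE -> DD p m = rhs m.
Let q j r := pn p (ix j r).

Lemma eqB j : j <= K -> q j 0 + q j 1 = 1.
Proof.
move=> Hj; have := Hp (m := 4 * j + 0) ltac:(rewrite /nE; lia).
rewrite D_eqn /eqn /rhs; case: (divmod4 j (isT : 0 < 4)) => -> ->.
by rewrite !big_cons big_nil /= !mul1n addn0.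
Qed.

Lemma eqW j : j < K -> q j 2 + q j 4 + MM * q j 1 = MM.
Proof.
move=> Hj; have := Hp (m := 4 * j + 2) ltac:(rewrite /nE; lia).
rewrite D_eqn /eqn /rhs; case: (divmod4 j (isT : 2 < 4)) => -> ->; rewrite Hj.
by rewrite !big_cons big_nil /= !mul1n addn0 addnA.
Qed.

Lemma eqR j : j < K -> q j 3 + q j 5 + MM * q j 0 = MM.
Proof.
move=> Hj; have := Hp (m := 4 * j + 3) ltac:(rewrite /nE; lia).
rewrite D_eqn /eqn /rhs; case: (divmod4 j (isT : 3 < 4)) => -> ->; rewrite Hj.
by rewrite !big_cons big_nil /= !mul1n addn0 addnA.
Qed.

Lemma eqU0 : q 0 2 + q 0 3 = 1.
Proof.
have := Hp (m := 4 * 0 + 1) ltac:(rewrite /nE; lia).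
rewrite D_eqn /eqn /rhs; case: (divmod4 0 (isT : 1 < 4)) => -> ->.
by rewrite !big_cons big_nil /= !mul1n addn0.
Qed.

Lemma eqU j : j < K ->
  q j.+1 2 + q j.+1 3 + q j 5 + MM * q j 0 + cc j * q j 4 + cc j * MM * q j 1
  = MM + cc j * MM.
Proof.
move=> Hj; have := Hp (m := 4 * j.+1 + 1) ltac:(rewrite /nE; lia).
rewrite D_eqn /eqn /rhs; case: (divmod4 j.+1 (isT : 1 < 4)) => -> ->.
by rewrite !big_cons big_nil /= !mul1n addn0 !addnA.
Qed.

Definition Ej j := \sum_(l < j) 2 ^ l * q l 0.

Lemma u_step j : j < K ->
  q j.+1 2 + q j.+1 3 = cc j ^ q j 0 * (q j 2 + q j 3) /\ q j 0 <= 1.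
Proof.
move=> Hj.
have hB := eqB (ltnW Hj); have hW := eqW Hj; have hR := eqR Hj; have hU := eqU Hj.
have [h0|h0] : q j 0 = 0 \/ q j 0 = 1 by lia.
- have h1 : q j 1 = 1 by lia.
  rewrite h0 expn0 mul1n; rewrite h0 h1 !muln0 !muln1 in hU hW hR.
  split => //; lia.
- have h1 : q j 1 = 0 by lia.
  rewrite h0 expn1; rewrite h0 h1 !muln0 !muln1 in hU hW hR.
  have e : cc j * MM = cc j * q j 2 + cc j * q j 4.
    by rewrite -mulnDr; congr (_ * _); lia.
  split => //; rewrite mulnDr; lia.
Qed.

Lemma u_all j : j <= K -> q j 2 + q j 3 = Bz ^ Ej j /\ Ej j < 2 ^ j.
Proof.
elim: j => [|j IH] Hj.
  by rewrite /Ej big_ord0 eqU0.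
have [IH1 IH2] := IH (ltnW Hj).
have [s1 s2] := u_step Hj.
rewrite /Ej big_ord_recr /= -/(Ej j) s1 IH1 /cc -expnM -expnD expnS.
split; first by congr (_ ^ _); ring.
have : 2 ^ j * q j 0 <= 2 ^ j by rewrite -{2}(muln1 (2 ^ j)) leq_mul2l s2 orbT.
lia.
Qed.

Lemma used_val : q K 2 + q K 3 = Bz ^ Ej K /\ Ej K < NN.
Proof. exact: u_all. Qed.
End Used.

Definition aa (i : 'I_d) := \sum_(t < NN) val t i.
Definition conf (t : nat) : cand d Cap := [ffun i : 'I_d => inord (val t i)].

Lemma MM_le_Cap : MM <= Cap.
Proof.
have H2 : 2 < nE by rewrite /nE; lia.
rewrite /Cap (bigD1 (Ordinal H2)) //=.
apply: leq_trans (leq_addr _ _).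
have -> : rhs 2 = MM by rewrite /rhs /= hK.
by rewrite -{1}(muln1 MM) leq_mul2l expn_gt0 orbT.
Qed.

Lemma conf_val t (i : 'I_d) : t < NN -> (conf t i : nat) = val t i.
Proof.
move=> Ht; rewrite ffunE inordK // ltnS.
exact: leq_trans (val_le i Ht) MM_le_Cap.
Qed.

Lemma dot_conf t : t < NN -> \sum_(i < d) sz i * conf t i = Cap.
Proof.
move=> Ht.
rewrite (eq_bigr (fun i : 'I_d => sz i * val t i)); last by move=> i _; rewrite conf_val.
rewrite (dot_digits (fun i => val t i)) /Cap; apply: eq_bigr => m _.
by rewrite D_conf.
Qed.

Definition yy : {ffun cand d Cap -> nat} :=
  [ffun p => \sum_(t < NN) (p == conf t)].

Lemma sum_pick (c : cand d Cap) (F : cand d Cap -> nat) :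
  \sum_(p : cand d Cap) (p == c) * F p = F c.
Proof.
rewrite (bigD1 c) //= eqxx mul1n big1 ?addn0 // => p /negbTE ->.
by rewrite mul0n.
Qed.

Lemma yy_feas : config_ilp_feasible sz aa Cap yy.
Proof.
split.
- move=> p; rewrite ffunE => H.
  have : ~~ [forall t : 'I_NN, p != conf t].
    apply: contra H => /forallP H; apply/eqP; apply: big1 => t _.
    by rewrite (negbTE (H t)).
  rewrite negb_forall => /existsP [t]; rewrite negbK => /eqP ->.
  by rewrite /is_config dot_conf.
- move=> i; rewrite /aa.
  rewrite (eq_bigr (fun p => \sum_(t < NN) (p == conf t) * p i)); last first.
    by move=> p _; rewrite ffunE big_distrl.
  rewrite exchange_big /=; apply: eq_bigr => t _.
  by rewrite (sum_pick (conf t) (fun p => (p i : nat))) conf_val.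
Qed.

Lemma nbins_yy : nbins yy = NN.
Proof.
rewrite /nbins.
rewrite (eq_bigr (fun p => \sum_(t < NN) (p == conf t) * 1)); last first.
  by move=> p _; rewrite ffunE; apply: eq_bigr => t _; rewrite muln1.
rewrite exchange_big /=.
rewrite (eq_bigr (fun _ => 1)); last by move=> t _; rewrite (sum_pick _ (fun _ => 1)).
by rewrite sum_nat_const card_ord muln1.
Qed.

Lemma sum_eq_each (I : finType) (f g : I -> nat) :
  (forall i, f i <= g i) -> \sum_i g i <= \sum_i f i -> forall i, f i = g i.
Proof.
move=> Hle Hs i.
have E : \sum_i (g i - f i) + \sum_i f i = \sum_i g i.
  by rewrite -big_split /=; apply: eq_bigr => j _; rewrite subnK.
have Z : \sum_i (g i - f i) == 0.
  rewrite -(eqn_add2r (\sum_i f i)) E add0n eqn_leq Hs /=.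
  by apply: leq_sum.
move: Z; rewrite sum_nat_eq0 => /forallP /(_ i) /eqP.
move: (Hle i); lia.
Qed.

Theorem main_sec (x : {ffun cand d Cap -> nat}) :
  config_ilp_optimal sz aa Cap x -> NN <= #|supp x|.
Proof.
move=> [[Hx1 Hx2] Hopt].
have Hnb : nbins x <= NN by rewrite -nbins_yy; apply: Hopt; exact: yy_feas.
pose dot (p : cand d Cap) := \sum_(i < d) sz i * p i.
have Htot : \sum_p x p * dot p = NN * Cap.
  rewrite /dot.
  rewrite (eq_bigr (fun p => \sum_(i < d) sz i * (x p * p i))); last first.
    by move=> p _; rewrite big_distrr; apply: eq_bigr => i _ /=; ring.
  rewrite exchange_big /=.
  rewrite (eq_bigr (fun i => sz i * aa i)); last first.
    by move=> i _; rewrite -big_distrr /= Hx2.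
  rewrite /aa.
  rewrite (eq_bigr (fun i => \sum_(t < NN) sz i * val t i)); last first.
    by move=> i _; rewrite big_distrr.
  rewrite exchange_big /=.
  rewrite (eq_bigr (fun _ => Cap)); last first.
    move=> t _; rewrite -(dot_conf (ltn_ord t)).
    by apply: eq_bigr => i _; rewrite conf_val.
  by rewrite sum_nat_const card_ord.
have Hfull : forall p, x p != 0 -> dot p = Cap.
  have each := @sum_eq_each _ (fun p => x p * dot p) (fun p => x p * Cap).
  move=> p Hp.
  have e : x p * dot p = x p * Cap.
    apply: each => [q|].
      case: (eqVneq (x q) 0) => [->|Hq]; first by rewrite !mul0n.
      by rewrite leq_mul2l; apply/orP; right; exact: Hx1 q Hq.
    rewrite Htot -big_distrl /=; rewrite leq_mul2r Hnb orbT //.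
  by apply/eqP; rewrite -(eqn_pmul2l (m := x p)) ?lt0n // e.
have Hpa : forall p, x p != 0 -> forall i, (p i : nat) <= aa i.
  move=> p Hp i; rewrite -Hx2 (bigD1 p) //=.
  apply: leq_trans (leq_addr _ _).
  by rewrite leq_pmull // lt0n.
have HD : forall p, x p != 0 -> forall m, m < nE -> DD (fun i => p i) m = rhs m.
  move=> p Hp.
  have Hb : forall m, m < nE -> DD (fun i => p i) m < Bs.
    move=> m Hm.
    apply: (@leq_ltn_trans (NN * rhs m)); last first.
      by rewrite ltnS leq_mul2l (rhs_le Hm) orbT.
    apply: (@leq_trans (\sum_(i < d) aa i * coef i m)).
      by apply: leq_sum => i _; rewrite leq_mul2r (Hpa p Hp i) orbT.
    rewrite /aa.
    rewrite (eq_bigr (fun i : 'I_d => \sum_(t < NN) val t i * coef i m)); last first.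
      by move=> i _; rewrite big_distrl.
    rewrite exchange_big /=.
    rewrite (eq_bigr (fun _ => rhs m)); last first.
      by move=> t _; rewrite -(D_conf (ltn_ord t) Hm).
    by rewrite sum_nat_const card_ord.
  have Hr : forall m, m < nE -> rhs m < Bs.
    move=> m Hm; rewrite ltnS; apply: leq_trans (rhs_le Hm) _.
    by rewrite leq_pmull // /NN expn_gt0.
  apply: digits_uniq Hb Hr _.
  by rewrite -dot_digits -/(dot p) (Hfull p Hp).
pose E (p : cand d Cap) := Ej (fun i => p i) K.
pose F (p : cand d Cap) := pn (fun i => p i) (ix K 2) + pn (fun i => p i) (ix K 3).
have HF : forall p, x p != 0 -> F p = Bz ^ E p /\ E p < NN.
  by move=> p Hp; exact: used_val (HD p Hp).
have Hpn : forall n, n < d -> \sum_p x p * pn (fun i => p i) n = \sum_(t < NN) val t n.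
  move=> n Hn.
  rewrite (eq_bigr (fun p => \sum_(i < d | (i : nat) == n) x p * p i)); last first.
    by move=> p _; rewrite /pn big_distrr.
  rewrite exchange_big /=.
  rewrite (eq_bigr (fun i : 'I_d => aa i)); last by move=> i _; rewrite Hx2.
  exact: (pn_fun (fun n => \sum_(t < NN) val t n) Hn).
have HK2 : ix K 2 < d by rewrite hd /ix; lia.
have HK3 : ix K 3 < d by rewrite hd /ix; lia.
have Hglob : \sum_p x p * F p = \sum_(t < NN) Bz ^ t.
  rewrite /F (eq_bigr (fun p => x p * pn (fun i => p i) (ix K 2) + x p * pn (fun i => p i) (ix K 3)));
    last by move=> p _; rewrite mulnDr.
  rewrite big_split /= !Hpn // -big_split /=.
  apply: eq_bigr => t _; rewrite !val_ix // /= uu_K // /bit.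
  by case: odd; rewrite /= ?mul1n ?mul0n ?addn0.
pose cnt (t : nat) := \sum_p (E p == t) * x p.
have Hcnt : \sum_p x p * F p = \sum_(t < NN) cnt t * Bz ^ t.
  rewrite (eq_bigr (fun p => \sum_(t < NN) (E p == t) * x p * Bz ^ t)); last first.
    move=> p _; case: (eqVneq (x p) 0) => [->|Hp].
      by rewrite mul0n big1 // => t _; rewrite muln0 mul0n.
    have [-> Elt] := HF p Hp.
    move: (E p) Elt => e Elt.
    rewrite (bigD1 (Ordinal Elt)) //.
    change (nat_of_ord (Ordinal Elt)) with e.
    rewrite eqxx mul1n big1 /=; first by rewrite addn0 mulnC.
    move=> t Ht; case: eqP => [Et|]; last by rewrite !mul0n.
    by move: Ht; rewrite -val_eqE /= Et eqxx.
  rewrite exchange_big /=; apply: eq_bigr => t _.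
  by rewrite /cnt big_distrl.
have Hc1 : forall t, t < NN -> cnt t = 1.
  apply: (@digits_uniq Bz NN cnt (fun _ => 1)).
  - move=> t _; rewrite /cnt; apply: (@leq_ltn_trans NN) => //.
    apply: leq_trans Hnb; apply: leq_sum => p _.
    by case: (_ == _); rewrite ?mul1n ?mul0n.
  - by move=> _ _; rewrite /Bz ltnS /NN expn_gt0.
  - by rewrite -Hcnt Hglob; apply: eq_bigr => t _; rewrite mul1n.
have Hex : forall t : 'I_NN, [exists p, (x p != 0) && (E p == t)].
  move=> t; have := Hc1 t (ltn_ord t).
  case: (boolP [exists p, (x p != 0) && (E p == t)]) => // Hn.
  move: Hn; rewrite negb_exists => /forallP H.
  rewrite /cnt big1 // => p _.
  have := H p; rewrite negb_and negbK; case/orP => [/eqP ->|/negbTE ->].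
    by rewrite muln0.
  by rewrite mul0n.
pose g (t : 'I_NN) : cand d Cap :=
  odflt (conf 0) [pick p | (x p != 0) && (E p == t)].
have Hg : forall t, (x (g t) != 0) && (E (g t) == t).
  move=> t; rewrite /g; case: pickP => [p -> //|H].
  by have := Hex t; rewrite (eq_existsb H) /= => /existsP [].
have ginj : injective g.
  move=> t1 t2 e; apply: ord_inj.
  have /andP[_ /eqP <-] := Hg t1; have /andP[_ /eqP <-] := Hg t2.
  by rewrite e.
rewrite -{1}(card_ord NN) -(card_imset _ ginj).
apply: subset_leq_card; apply/subsetP => p /imsetP [t _ ->].
rewrite /supp inE.
by case/andP: (Hg t).
Qed.



End Cons.
Theorem theorem1 :
  forall d' : nat, 1 <= d' ->
  exists (s a : 'I_(12 * d' + 4) -> nat) (C : nat),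
    (forall i, 0 < s i <= C) /\
    (forall x : {ffun cand (12 * d' + 4) C -> nat},
        config_ilp_optimal s a C x -> 2 ^ d' - 1 <= #|supp x|).
Proof.
move=> d' Hd'.
have hd : 12 * d' + 4 = 6 * (2 * d') + 4 by rewrite mulnA.
have hK : 0 < 2 * d' by rewrite muln_gt0.
exists (sz (2 * d') (d := 12 * d' + 4)), (aa (2 * d') (d := 12 * d' + 4)), (Cap (2 * d')).
split.
  by move=> i; rewrite (sz_pos hd hK) sz_le.
move=> x Hx.
have := main_sec hd hK Hx.
apply: leq_trans.
rewrite /NN leq_subLR; apply: leq_trans (leq_addl _ _).
by rewrite leq_exp2l // leq_pmull.
Qed.
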